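(* Let $A(z,\lambda)=\sum_{i\ge0}A_i(z)\lambda^i\in\mathfrak{gl}_2(\mathbb{C}((z))[[\lambda]])$ and $R(z,\lambda)\in\mathrm{GL}_2(\mathbb{C}((z))[[\lambda]])$ satisfy: (1) $A(z,\lambda)$ is diagonal; (2) $R(z,0)\in\mathfrak{gl}_2(\mathbb{C}[[z]])$; (3) $\det R(z,0)\in\mathbb{C}[[z]]$ has a first-order zero at $z=0$; (4) $\tilde A:=R^{-1}AR+\lambda R^{-1}\frac{dR}{dz}\in\mathfrak{gl}_2(\mathbb{C}[[z,\lambda]])$. Then $A_1(z)\in z^{-1}\mathfrak{gl}_2(\mathbb{C}[[z]])$. *)

(* Defs.v *)
(* Formal series are encoded by their coefficients:
   an element of gl_2(K((z))[[lambda]]) is a function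
     a : nat -> int -> 'M[K]_2,   a i k = matrix coefficient of lambda^i z^k,
   such that for every i the Laurent series a i is bounded below in z. *)
From HB Require Import structures.
From mathcomp Require Import all_boot all_order all_algebra.
From mathcomp Require Import complex Rstruct.
From Stdlib Require Import Reals ClassicalEpsilon.

Set Implicit Arguments. Unset Strict Implicit. Unset Printing Implicit Defensive.
Import Order.TTheory GRing.Theory Num.Theory.
Local Open Scope ring_scope.

Notation Cplx := (Rdefinitions.R[i]).

Section MxSeries.
Variable K : fieldType.

Definition mxser := nat -> int -> 'M[K]_2.

Definition laurent (a : mxser) : Prop :=
  forall i : nat, exists N : int, forall k : int, k < N -> a i k = 0.

(* a lies in gl_2(K[[z,lambda]]) *)
Definition powser (a : mxser) : Prop :=
  forall (i : nat) (k : int), k < 0 -> a i k = 0.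

(* a chosen lower bound: a i k = 0 for k < - lb a i (meaningful when laurent a) *)
Definition lb (a : mxser) (i : nat) : nat :=
  epsilon (inhabits 0%N)
    (fun N : nat => forall k : int, k < - (N%:Z) -> a i k = 0).

Definition mxser_add (a b : mxser) : mxser := fun i k => a i k + b i k.

Definition mxser_one : mxser :=
  fun i k => if (i == 0%N) && (k == 0) then 1%:M else 0.

(* Cauchy product in K((z))[[lambda]]: the inner sum runs over
   l = t - lb a j in [-lb a j, k + lb b (i-j)] (a superset of the support) *)
Definition mxser_mul (a b : mxser) : mxser := fun i k =>
  \sum_(j < i.+1)
    \sum_(t < (absz (k + (lb b (subn i j))%:Z + (lb a j)%:Z)).+1)
      a j (t%:Z - (lb a j)%:Z) *m b (subn i j) (k - (t%:Z - (lb a j)%:Z)).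

Definition mxser_dz (a : mxser) : mxser :=
  fun i k => (k + 1)%:~R *: a i (k + 1).

Definition mxser_lam (a : mxser) : mxser :=
  fun i k => if i is i'.+1 then a i' k else 0.

Definition i0 : 'I_2 := @Ordinal 2 0 isT.
Definition i1 : 'I_2 := @Ordinal 2 1 isT.

(* coefficient of z^m in det R(z,0), for R(z,0) a power series matrix *)
Definition det0_coef (r : mxser) (m : nat) : K :=
  \sum_(l < m.+1)
    (r 0%N l%:Z i0 i0 * r 0%N (subn m l)%:Z i1 i1
     - r 0%N l%:Z i0 i1 * r 0%N (subn m l)%:Z i1 i0).

(* R^{-1} A R + lambda R^{-1} dR/dz, with S = R^{-1} *)
Definition gauge (A R S : mxser) : mxser :=
  mxser_add (mxser_mul (mxser_mul S A) R) (mxser_lam (mxser_mul S (mxser_dz R))).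

End MxSeries.

(* Main.v *)
Require Import Defs.
From HB Require Import structures.
From mathcomp Require Import all_boot all_order all_algebra.
From mathcomp Require Import complex Rstruct.
From Stdlib Require Import Reals.
From mathcomp Require Import zify ring.
From Stdlib Require Import ClassicalEpsilon FunctionalExtensionality.
Import Order.TTheory GRing.Theory Num.Theory.
Set Implicit Arguments. Unset Strict Implicit. Unset Printing Implicit Defensive.
Local Open Scope ring_scope.


Definition pc (T : nzRingType) (F G : nat -> T) (n : nat) : T :=
  \sum_(t < n.+1) F t * G (n - t)%nat.

Lemma eq_pc (T : nzRingType) (F F' G G' : nat -> T) n :
  (forall t, (t <= n)%nat -> F t = F' t) -> (forall t, (t <= n)%nat -> G t = G' t) ->
  pc F G n = pc F' G' n.
Proof.
move=> hF hG; apply: eq_bigr => t _; rewrite hF ?hG //; try lia.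
have := ltn_ord t; lia.
Qed.

Lemma pcA (T : nzRingType) (F G H : nat -> T) n :
  pc (pc F G) H n = pc F (pc G H) n.
Proof.
pose P (E : nat -> T) : {poly T} := \poly_(i < n.+1) E i.
have key : forall E1 E2 m, (m <= n)%nat -> pc E1 E2 m = (P E1 * P E2)`_m.
  move=> E1 E2 m hm; rewrite coefM /pc; apply: eq_bigr => i _.
  have hi := ltn_ord i.
  rewrite !coef_poly ifT ?ifT //; lia.
transitivity (((P F * P G) * P H)`_n).
  rewrite coefM /pc; apply: eq_bigr => i _.
  have hi := ltn_ord i.
  rewrite -key; last by lia.
  rewrite coef_poly ifT //; lia.
rewrite -mulrA coefM /pc; apply: eq_bigr => i _.
have hi := ltn_ord i.
rewrite -key; last by lia.
rewrite coef_poly ifT //; lia.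
Qed.

Lemma pc_rev (T : nzRingType) (F G : nat -> T) n :
  pc F G n = \sum_(t < n.+1) F (n - t)%nat * G t.
Proof.
rewrite /pc (reindex_inj rev_ord_inj) /=; apply: eq_bigr => t _.
have ht := ltn_ord t.
have -> : (n - (n.+1 - t.+1))%nat = t by lia.
by rewrite subSS.
Qed.

Lemma pc_comm (T : comNzRingType) (F G : nat -> T) n : pc F G n = pc G F n.
Proof. by rewrite pc_rev; apply: eq_bigr => t _; rewrite mulrC. Qed.

Section Lau.
Variable K : fieldType.
Local Notation M := 'M[K]_2.

Definition lbf (f : int -> M) : nat :=
  epsilon (inhabits 0%nat) (fun N : nat => forall k : int, k < - (N%:Z) -> f k = 0).

Definition lmul (f g : int -> M) : int -> M := fun k =>
  \sum_(t < (absz (k + (lbf g)%:Z + (lbf f)%:Z)).+1)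
      f (t%:Z - (lbf f)%:Z) *m g (k - (t%:Z - (lbf f)%:Z)).

Definition bnd (N : nat) (f : int -> M) := forall k : int, k < - (N%:Z) -> f k = 0.
Definition bdd f := exists N, bnd N f.

Lemma lbfP f : bdd f -> bnd (lbf f) f.
Proof.
move=> [N HN]; rewrite /lbf.
exact: (epsilon_spec (inhabits 0%nat)
  (fun N => forall k : int, k < - (N%:Z) -> f k = 0) (ex_intro _ N HN)).
Qed.

Lemma bnd_mono N N' f : bnd N f -> (N <= N')%nat -> bnd N' f.
Proof. move=> h le k hk; apply: h; lia. Qed.

Definition Ssum (N n : nat) (f g : int -> M) (k : int) : M :=
  \sum_(t < n) f (t%:Z - N%:Z) *m g (k - (t%:Z - N%:Z)).

Lemma lmulE f g k : lmul f g k = Ssum (lbf f) (absz (k + (lbf g)%:Z + (lbf f)%:Z)).+1 f g k.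
Proof. by []. Qed.

Lemma Ssum_ext N2 N n m f g k : bnd N2 g -> k + N%:Z + N2%:Z < n%:Z ->
  Ssum N (n + m) f g k = Ssum N n f g k.
Proof.
move=> hg hk; elim: m => [|m IH]; first by rewrite addn0.
rewrite addnS /Ssum big_ord_recr /= -/(Ssum N (n + m) f g k) IH.
rewrite hg ?mulmx0 ?addr0 //; lia.
Qed.

Lemma Ssum_shift N n f g k : bnd N f -> Ssum N.+1 n.+1 f g k = Ssum N n f g k.
Proof.
move=> hf; rewrite /Ssum big_ord_recl /= hf ?mul0mx ?add0r; last by lia.
apply: eq_bigr => t _; rewrite /bump /=.
have -> : ((1 + t)%nat%:Z - N.+1%:Z) = t%:Z - N%:Z by lia.
by [].
Qed.

Lemma Ssum_shiftn N a n f g k : bnd N f -> Ssum (N + a) (n + a) f g k = Ssum N n f g k.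
Proof.
move=> hf; elim: a => [|a IH]; first by rewrite !addn0.
rewrite !addnS Ssum_shift ?IH //. exact: (bnd_mono hf (leq_addr a N)).
Qed.

Lemma lmul_S N1 N2 n f g k : bnd N1 f -> bnd N2 g -> k + N1%:Z + N2%:Z < n%:Z ->
  lmul f g k = Ssum N1 n f g k.
Proof.
move=> hf hg hk.
have hf' : bnd (lbf f) f by apply: lbfP; exists N1.
have hg' : bnd (lbf g) g by apply: lbfP; exists N2.
rewrite lmulE.
set n0 := (absz _).+1.
rewrite -(Ssum_shiftn N1 _ _ _ hf') -(Ssum_shiftn (lbf f) _ _ _ hf) (addnC N1).
have e1 := @Ssum_ext (lbf g) (lbf f + N1)%nat (n0 + N1)%nat (n + lbf f)%nat f g k hg' (_ : k + (lbf f + N1)%nat%:Z + (lbf g)%:Z < (n0 + N1)%nat%:Z).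
have e2 := @Ssum_ext N2 (lbf f + N1)%nat (n + lbf f)%nat (n0 + N1)%nat f g k hg (_ : k + (lbf f + N1)%nat%:Z + N2%:Z < (n + lbf f)%nat%:Z).
rewrite -e1; last by rewrite /n0; lia.
rewrite -e2; last by lia.
by rewrite (addnC (n0 + N1)%nat).
Qed.


Lemma bnd_lmul N1 N2 f g : bnd N1 f -> bnd N2 g -> bnd (N1 + N2) (lmul f g).
Proof.
move=> hf hg k hk; rewrite (@lmul_S N1 N2 0%nat f g k hf hg); last by lia.
by rewrite /Ssum big_ord0.
Qed.

Lemma bdd_lmul f g : bdd f -> bdd g -> bdd (lmul f g).
Proof. move=> [N1 h1] [N2 h2]; exists (N1 + N2)%nat; exact: bnd_lmul. Qed.

Definition sh (N : nat) (f : int -> M) : nat -> M := fun t => f (t%:Z - N%:Z).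

Lemma lmul_pc N1 N2 f g (n : nat) : bnd N1 f -> bnd N2 g ->
  lmul f g (n%:Z - N1%:Z - N2%:Z) = pc (sh N1 f) (sh N2 g) n.
Proof.
move=> hf hg; rewrite (@lmul_S N1 N2 n.+1 f g _ hf hg); last by lia.
rewrite /Ssum /pc mulmxE; apply: eq_bigr => t _; rewrite /sh.
have ht := ltn_ord t.
have -> : n%:Z - N1%:Z - N2%:Z - (t%:Z - N1%:Z) = (n - t)%nat%:Z - N2%:Z by lia.
by [].
Qed.

Lemma sh_lmul N1 N2 f g : bnd N1 f -> bnd N2 g ->
  sh (N1 + N2) (lmul f g) = pc (sh N1 f) (sh N2 g).
Proof.
move=> hf hg; apply: functional_extensionality => t.
rewrite /sh -(lmul_pc _ hf hg); congr lmul; lia.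
Qed.

Lemma lmulA f g h : bdd f -> bdd g -> bdd h -> lmul (lmul f g) h = lmul f (lmul g h).
Proof.
move=> [N1 h1] [N2 h2] [N3 h3]; apply: functional_extensionality => k.
have hfg := bnd_lmul h1 h2; have hgh := bnd_lmul h2 h3.
case: (boolP (k + N1%:Z + N2%:Z + N3%:Z < 0)) => hk.
  rewrite (bnd_lmul hfg h3) ?(bnd_lmul h1 hgh) //; lia.
pose n := absz (k + N1%:Z + N2%:Z + N3%:Z).
have e1 : k = n%:Z - (N1 + N2)%nat%:Z - N3%:Z by rewrite /n; lia.
have e2 : k = n%:Z - N1%:Z - (N2 + N3)%nat%:Z by rewrite /n; lia.
transitivity (pc (pc (sh N1 f) (sh N2 g)) (sh N3 h) n).
  by rewrite {1}e1 lmul_pc // sh_lmul.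
by rewrite pcA e2 lmul_pc // sh_lmul.
Qed.

Definition fadd (f g : int -> M) : int -> M := fun k => f k + g k.
Definition fopp (f : int -> M) : int -> M := fun k => - f k.
Definition one0 : int -> M := fun k => if k == 0 then 1%:M else 0.

Lemma bnd_fadd N f g : bnd N f -> bnd N g -> bnd N (fadd f g).
Proof. by move=> hf hg k hk; rewrite /fadd hf ?hg ?addr0. Qed.

Lemma bdd_fadd f g : bdd f -> bdd g -> bdd (fadd f g).
Proof.
move=> [N1 h1] [N2 h2]; exists (N1 + N2)%nat; apply: bnd_fadd.
  exact: (bnd_mono h1 (leq_addr N2 N1)).
exact: (bnd_mono h2 (leq_addl N1 N2)).
Qed.

Lemma bdd_fopp f : bdd f -> bdd (fopp f).
Proof. by move=> [N h]; exists N => k hk; rewrite /fopp h ?oppr0. Qed.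

Lemma bnd_one0 : bnd 0 one0.
Proof. move=> k hk; rewrite /one0 ifF //; lia. Qed.

Lemma bdd_one0 : bdd one0.
Proof. exists 0%nat; exact: bnd_one0. Qed.

Lemma lmulDl f g h : bdd f -> bdd g -> bdd h -> lmul (fadd f g) h = fadd (lmul f h) (lmul g h).
Proof.
move=> [N1 h1] [N2 h2] [N3 h3]; apply: functional_extensionality => k.
have h1' := bnd_mono h1 (leq_addr N2 N1).
have h2' := bnd_mono h2 (leq_addl N1 N2).
have h12 := bnd_fadd h1' h2'.
pose n := (absz (k + (N1 + N2)%nat%:Z + N3%:Z)).+1.
have hn : k + (N1 + N2)%nat%:Z + N3%:Z < n%:Z by rewrite /n; lia.
rewrite /fadd (@lmul_S _ _ n _ _ k h12 h3 hn) (@lmul_S _ _ n _ _ k h1' h3 hn).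
rewrite (@lmul_S _ _ n _ _ k h2' h3 hn) /Ssum -big_split; apply: eq_bigr => t _.
by rewrite mulmxDl.
Qed.

Lemma lmulDr f g h : bdd f -> bdd g -> bdd h -> lmul f (fadd g h) = fadd (lmul f g) (lmul f h).
Proof.
move=> [N1 h1] [N2 h2] [N3 h3]; apply: functional_extensionality => k.
have h2' := bnd_mono h2 (leq_addr N3 N2).
have h3' := bnd_mono h3 (leq_addl N2 N3).
have h23 := bnd_fadd h2' h3'.
pose n := (absz (k + N1%:Z + (N2 + N3)%nat%:Z)).+1.
have hn : k + N1%:Z + (N2 + N3)%nat%:Z < n%:Z by rewrite /n; lia.
rewrite /fadd (@lmul_S _ _ n _ _ k h1 h23 hn) (@lmul_S _ _ n _ _ k h1 h2' hn).
rewrite (@lmul_S _ _ n _ _ k h1 h3' hn) /Ssum -big_split; apply: eq_bigr => t _.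
by rewrite mulmxDr.
Qed.

Lemma lmulNl f g : bdd f -> bdd g -> lmul (fopp f) g = fopp (lmul f g).
Proof.
move=> [N1 h1] [N2 h2]; apply: functional_extensionality => k.
have h1' : bnd N1 (fopp f) by move=> j hj; rewrite /fopp h1 ?oppr0.
pose n := (absz (k + N1%:Z + N2%:Z)).+1.
have hn : k + N1%:Z + N2%:Z < n%:Z by rewrite /n; lia.
rewrite /fopp (@lmul_S _ _ n _ _ k h1' h2 hn) (@lmul_S _ _ n _ _ k h1 h2 hn).
rewrite /Ssum -sumrN; apply: eq_bigr => t _.
by rewrite mulNmx.
Qed.

Lemma lmul1l f : bdd f -> lmul one0 f = f.
Proof.
move=> [N h]; apply: functional_extensionality => k.
pose n := (absz (k + 0%:Z + N%:Z)).+1.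
have hn : k + 0%:Z + N%:Z < n%:Z by rewrite /n; lia.
rewrite (@lmul_S _ _ n _ _ k bnd_one0 h hn) /Ssum /n big_ord_recl /=.
rewrite big1 ?addr0.
  rewrite /one0; case: eqP => [_|h0]; [by rewrite mul1mx | by exfalso; apply: h0].
move=> t _; rewrite /one0; case: eqP => e; last by rewrite mul0mx.
exfalso; move: e; rewrite /bump /=; lia.
Qed.

Lemma lmul1r f : bdd f -> lmul f one0 = f.
Proof.
move=> [N h]; apply: functional_extensionality => k.
case: (boolP (k + N%:Z < 0)) => hk.
  rewrite (@bnd_lmul _ _ _ _ h bnd_one0) ?h //; lia.
pose m := absz (k + N%:Z).
have hn : k + N%:Z + 0%:Z < m.+1%:Z by rewrite /m; lia.
rewrite (@lmul_S _ _ m.+1 _ _ k h bnd_one0 hn) /Ssum big_ord_recr /=.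
rewrite big1 ?add0r.
  have -> : m%:Z - N%:Z = k by rewrite /m; lia.
  by rewrite /one0 subrr eqxx mulmx1.
move=> t _; rewrite /one0 ifF ?mulmx0 //.
have := ltn_ord t; rewrite /m; lia.
Qed.

End Lau.


Section Lau2.
Variable K : fieldType.
Local Notation M := 'M[K]_2.

Lemma mul_diag_r (P D : M) i : is_diag_mx D -> (P * D) i i = P i i * D i i.
Proof.
move/is_diag_mxP => hD; rewrite -mulmxE mxE (bigD1 i) //= big1 ?addr0 //.
by move=> j hj; rewrite hD ?mulr0.
Qed.

Lemma mul_diag_l (P D : M) i : is_diag_mx D -> (D * P) i i = D i i * P i i.
Proof.
move/is_diag_mxP => hD; rewrite -mulmxE mxE (bigD1 i) //= big1 ?addr0 //.
by move=> j hj; rewrite hD ?mul0r // eq_sym.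
Qed.

Lemma lmul_diag_comm (X D : int -> M) k i : bdd X -> bdd D ->
  (forall k, is_diag_mx (D k)) -> lmul X D k i i = lmul D X k i i.
Proof.
move=> [N1 h1] [N2 h2] hD.
case: (boolP (k + N1%:Z + N2%:Z < 0)) => hk.
  rewrite (bnd_lmul h1 h2) ?(bnd_lmul h2 h1) ?mxE //; lia.
pose n := absz (k + N1%:Z + N2%:Z).
have e1 : k = n%:Z - N1%:Z - N2%:Z by rewrite /n; lia.
have e2 : k = n%:Z - N2%:Z - N1%:Z by rewrite /n; lia.
rewrite {1}e1 lmul_pc // e2 lmul_pc // (pc_rev (sh N2 D)) /pc !summxE.
apply: eq_bigr => t _. rewrite mul_diag_r; last exact: hD.
rewrite mul_diag_l; last exact: hD.
exact: mulrC.
Qed.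

Definition adjm (P : M) : M := \matrix_(a, b)
  (if a == i0 then (if b == i0 then P i1 i1 else - P i0 i1)
   else (if b == i0 then - P i1 i0 else P i0 i0)).

Lemma mul2E (P Q : M) a b : (P * Q) a b = P a i0 * Q i0 b + P a i1 * Q i1 b.
Proof.
rewrite -mulmxE mxE big_ord_recl big_ord1.
have -> : (ord0 : 'I_2) = i0 by apply: val_inj.
by have -> : lift i0 (ord0 : 'I_1) = i1 by apply: val_inj.
Qed.

Lemma adjm0 : adjm 0 = 0.
Proof. by apply/matrixP => a b; rewrite !mxE; case: ifP; case: ifP; rewrite ?oppr0. Qed.

Lemma ord2P (a : 'I_2) : a = i0 \/ a = i1.
Proof. case: a => [[|[|m]] h]; [left | right | by []]; exact: val_inj. Qed.

Lemma i10 : (i1 == i0) = false. Proof. by []. Qed.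
Lemma i01 : (i0 == i1) = false. Proof. by []. Qed.

Lemma pcc (F G : nat -> K) n :
  \sum_(t < n.+1) F t * G (n - t)%nat = \sum_(t < n.+1) G t * F (n - t)%nat.
Proof. exact: (pc_comm F G n). Qed.

Lemma adj_pc (F : nat -> M) n :
  pc (fun t => adjm (F t)) F n =
  (\sum_(t < n.+1) (F t i0 i0 * F (n - t)%nat i1 i1 - F t i0 i1 * F (n - t)%nat i1 i0))%:M.
Proof.
apply/matrixP => a b; rewrite /pc summxE mxE.
under eq_bigr => t _ do rewrite mul2E !mxE !eqxx ?i10 ?i01 /=.
case: (ord2P a) => ->; case: (ord2P b) => ->; rewrite ?eqxx ?i10 ?i01 ?mulr1n ?mulr0n.
all: rewrite big_split /=.
- rewrite (pcc (fun t => F t i1 i1) (fun t => F t i0 i0) n) /=.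
  by rewrite -big_split; apply: eq_bigr => t _ /=; rewrite mulNr.
- rewrite (pcc (fun t => F t i1 i1) (fun t => F t i0 i1) n) /=.
  by rewrite -big_split; apply: big1 => t _ /=; rewrite mulNr subrr.
- rewrite (pcc (fun t => F t i0 i0) (fun t => F t i1 i0) n) /=.
  by rewrite -big_split; apply: big1 => t _ /=; rewrite mulNr addNr.
- under eq_bigr => t _ do rewrite mulNr.
  rewrite sumrN (pcc (fun t => F t i1 i0) (fun t => F t i0 i1) n) /=.
  by rewrite -sumrN -big_split; apply: eq_bigr => t _ /=; rewrite addrC.
Qed.

Lemma sh0 (f : int -> M) : sh 0 f = fun t => f t%:Z.
Proof. by apply: functional_extensionality => t; rewrite /sh subr0. Qed.

Definition Dm (R : mxser K) : int -> M :=
  fun k => (if 0 <= k then det0_coef R (absz k) else 0)%:M.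

Lemma bnd_Dm R : bnd 0 (Dm R).
Proof. move=> k hk; rewrite /Dm; case: ifP => h; [lia | exact: raddf0]. Qed.

Lemma lmul_adj (R : mxser K) : bnd 0 (R 0%nat) ->
  lmul (fun k => adjm (R 0%nat k)) (R 0%nat) = Dm R.
Proof.
move=> hR.
have hA : bnd 0 (fun k => adjm (R 0%nat k)) by move=> k hk; rewrite /= hR // adjm0.
apply: functional_extensionality => k.
case: (boolP (k < 0)) => hk.
  rewrite (bnd_lmul hA hR); last by lia.
  rewrite bnd_Dm //; lia.
have e : k = (absz k)%:Z - 0%:Z - 0%:Z by lia.
rewrite {1}e lmul_pc // !sh0 adj_pc /Dm; case: ifP => h; last by lia.
by [].
Qed.

Lemma S0_bnd (R S : mxser K) : bnd 0 (R 0%nat) -> bdd (S 0%nat) ->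
  lmul (R 0%nat) (S 0%nat) = one0 K -> det0_coef R 0 = 0 -> det0_coef R 1 != 0 ->
  bnd 1 (S 0%nat).
Proof.
move=> hR [N hN] hRS d0 d1.
have hA : bnd 0 (fun k => adjm (R 0%nat k)) by move=> k hk; rewrite /= hR // adjm0.
have E : lmul (Dm R) (S 0%nat) = (fun k => adjm (R 0%nat k)).
  rewrite -lmul_adj // lmulA ?hRS ?lmul1r //. all: try by exists 0%nat. all: try by exists N.
suff H : forall m : nat, forall k, k < m%:Z - N%:Z -> k < -1 -> S 0%nat k = 0.
  move=> k hk; apply: (H (absz (k + N%:Z)).+1); lia.
elim=> [|m IH] k hk1 hk2.
  apply: hN; lia.
case: (boolP (k < m%:Z - N%:Z)) => hkm; first exact: IH.
have ek : k = m%:Z - N%:Z by lia.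
have Z : lmul (Dm R) (S 0%nat) (k + 1) = 0 by rewrite E /= hR ?adjm0 //; lia.
have ek1 : k + 1 = m.+1%:Z - 0%:Z - N%:Z by lia.
move: Z; rewrite ek1 lmul_pc; [|exact: bnd_Dm|exact: hN]. rewrite /pc big_ord_recl big_ord_recl /=.
rewrite big1; last first.
  move=> t _; rewrite /sh IH ?mulr0 //; have := ltn_ord t; rewrite /bump /=; lia.
have d0' : det0_coef R 0%nat = 0 := d0.
have d1' : det0_coef R 1%nat != 0 := d1.
have DmE : forall k, 0 <= k -> Dm R k = (det0_coef R (absz k))%:M.
  by move=> k0 h; rewrite /Dm h.
have Dm0 : sh 0 (Dm R) 0%nat = 0.
  by rewrite /sh subr0 DmE //= d0' raddf0.
have Dm1 : sh 0 (Dm R) 1%nat = (det0_coef R 1%nat)%:M.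
  by rewrite /sh subr0 DmE.
rewrite /bump /= Dm0 Dm1 mul0r add0r addr0 -mulmxE mul_scalar_mx /sh.
rewrite subSS subn0 -ek => /eqP; rewrite scaler_eq0 (negbTE d1') /=.
by move/eqP.
Qed.

End Lau2.


Lemma mxmul0 (K : fieldType) (a b : mxser K) : mxser_mul a b 0%nat = lmul (a 0%nat) (b 0%nat).
Proof. by apply: functional_extensionality => k; rewrite /mxser_mul big_ord1. Qed.

Lemma mxmul1 (K : fieldType) (a b : mxser K) :
  mxser_mul a b 1%nat = fadd (lmul (a 0%nat) (b 1%nat)) (lmul (a 1%nat) (b 0%nat)).
Proof. by apply: functional_extensionality => k; rewrite /mxser_mul big_ord_recr big_ord1. Qed.

Lemma laurent_bdd (K : fieldType) (a : mxser K) i : laurent a -> bdd (a i).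
Proof. move=> h; case: (h i) => N hN; exists (absz N) => k hk; apply: hN; lia. Qed.

Ltac bd := repeat (first [assumption | apply: bdd_lmul | apply: bdd_fadd | apply: bdd_fopp | exact: bdd_one0]).

Unset Implicit Arguments.
Theorem lemma4p11 (A R S : mxser Cplx) :
  laurent A -> laurent R -> laurent S ->
  (* R in GL_2(C((z))[[lambda]]) with inverse S *)
  mxser_mul R S = mxser_one Cplx -> mxser_mul S R = mxser_one Cplx ->
  (* (1) A diagonal *)
  (forall (i : nat) (k : int), is_diag_mx (A i k)) ->
  (* (2) R(z,0) in gl_2(C[[z]]) *)
  (forall k : int, k < 0 -> R 0%N k = 0) ->
  (* (3) det R(z,0) has a first-order zero at z = 0 *)
  det0_coef R 0 = 0 -> det0_coef R 1 != 0 ->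
  (* (4) R^{-1} A R + lambda R^{-1} dR/dz in gl_2(C[[z,lambda]]) *)
  powser (gauge A R S) ->
  (* A_1 in z^{-1} gl_2(C[[z]]) *)
  forall k : int, k < -1 -> A 1%N k = 0.
Proof.
move=> hA hR hS hRS hSR hdiag hR0 d0 d1 hG k hk.
have bA0 := laurent_bdd 0%nat hA; have bA1 := laurent_bdd 1%nat hA.
have bR0 := laurent_bdd 0%nat hR; have bR1 := laurent_bdd 1%nat hR.
have bS0 := laurent_bdd 0%nat hS; have bS1 := laurent_bdd 1%nat hS.
have nR0 : bnd 0 (R 0%nat) by move=> j hj; apply: hR0; lia.
pose R0' := mxser_dz R 0%nat.
have nR0' : bnd 0 R0'.
  move=> j hj; rewrite /R0' /mxser_dz.
  case: (boolP (j == -1)) => hj1; first by rewrite (eqP hj1) /= scale0r.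
  rewrite hR0 ?scaler0 //; lia.
have bR0' : bdd R0' by exists 0%nat.
pose G1 := gauge A R S 1%nat.
have nG1 : bnd 0 G1 by move=> j hj; apply: hG; lia.
have bG1 : bdd G1 by exists 0%nat.
have e00 : lmul (R 0%nat) (S 0%nat) = one0 Cplx by rewrite -mxmul0 hRS.
have e00' : lmul (S 0%nat) (R 0%nat) = one0 Cplx by rewrite -mxmul0 hSR.
have e11 : lmul (R 0%nat) (S 1%nat) = fopp (lmul (R 1%nat) (S 0%nat)).
  apply: functional_extensionality => j.
  have := congr1 (fun F => F 1%nat j) hRS; rewrite /= mxmul1 /fadd /fopp /mxser_one /=.
  by move/eqP; rewrite addr_eq0 => /eqP.
have eG : G1 = fadd (fadd (lmul (lmul (S 0%nat) (A 0%nat)) (R 1%nat))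
     (lmul (fadd (lmul (S 0%nat) (A 1%nat)) (lmul (S 1%nat) (A 0%nat))) (R 0%nat)))
     (lmul (S 0%nat) R0').
  apply: functional_extensionality => j.
  by rewrite /G1 /gauge /mxser_add /mxser_lam /= mxmul1 !mxmul0 mxmul1.
pose X := lmul (R 1%nat) (S 0%nat).
have bX : bdd X by bd.
have t1 : lmul (R 0%nat) (lmul (lmul (S 0%nat) (A 0%nat)) (R 1%nat)) = lmul (A 0%nat) (R 1%nat).
  rewrite -lmulA; bd. rewrite -lmulA; bd. rewrite e00 lmul1l //; bd.
have t2 : lmul (R 0%nat) (lmul (lmul (S 0%nat) (A 1%nat)) (R 0%nat)) = lmul (A 1%nat) (R 0%nat).
  rewrite -lmulA; bd. rewrite -lmulA; bd. rewrite e00 lmul1l //; bd.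
have t3 : lmul (R 0%nat) (lmul (lmul (S 1%nat) (A 0%nat)) (R 0%nat)) = fopp (lmul (lmul X (A 0%nat)) (R 0%nat)).
  rewrite -lmulA; bd. rewrite -lmulA; bd. rewrite e11 lmulNl; bd. rewrite lmulNl //; bd.
have t4 : lmul (R 0%nat) (lmul (S 0%nat) R0') = R0'.
  rewrite -lmulA; bd. rewrite e00 lmul1l //; bd.
have C1 : lmul (R 0%nat) G1 = fadd (fadd (lmul (A 0%nat) (R 1%nat))
     (fadd (lmul (A 1%nat) (R 0%nat)) (fopp (lmul (lmul X (A 0%nat)) (R 0%nat))))) R0'.
  rewrite eG. rewrite lmulDr; bd. rewrite lmulDr; bd. rewrite lmulDl; bd. rewrite lmulDr; bd.
  by rewrite t1 t2 t3 t4.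
have C2 : lmul (lmul (R 0%nat) G1) (S 0%nat) = fadd (fadd (lmul (A 0%nat) X)
     (fadd (A 1%nat) (fopp (lmul X (A 0%nat))))) (lmul R0' (S 0%nat)).
  rewrite C1. rewrite lmulDl; bd. rewrite lmulDl; bd. rewrite lmulDl; bd. rewrite lmulNl //; bd.
  rewrite lmulA; bd. rewrite (@lmulA _ (A 1%nat)); bd. rewrite e00 lmul1r //; bd.
  rewrite (@lmulA _ (lmul X (A 0%nat))); bd. rewrite e00 lmul1r //; bd.
have nS0 : bnd 1 (S 0%nat).
  apply: (S0_bnd nR0 bS0 e00 d0 d1).
have T0 : lmul (lmul (R 0%nat) G1) (S 0%nat) k = 0.
  apply: (bnd_lmul (bnd_lmul nR0 nG1) nS0); lia.
have T1 : lmul R0' (S 0%nat) k = 0.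
  apply: (bnd_lmul nR0' nS0); lia.
have hd := hdiag 1%nat k.
apply/matrixP => a b; rewrite mxE.
case: (eqVneq a b) => [<-|hab]; last by apply: (is_diag_mxP hd).
have := congr1 (fun F : int -> 'M[Cplx]_2 => F k a a) C2.
rewrite /fadd /fopp /= T0 T1 !mxE (lmul_diag_comm k a bX bA0 (hdiag 0%nat)).
move/eqP; rewrite eq_sym addr0 addrCA subrr addr0.
by move/eqP.
Qed.
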